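(* (i) Every positive integer $N\equiv 1\pmod 8$ can be written as $N=x^2+P$ with $x$ a nonnegative integer and $P$ a practical number. (ii) For every $j\in\{0,2,3,4,5,6,7\}$ there exist infinitely many nonnegative integers $k$ such that $8k+j$ cannot be written as $x^2+P$ with $x$ a nonnegative integer and $P$ a practical number.
   Context: A positive integer $N$ is called a practical number if every integer in $[1,N]$ can be expressed as a sum of distinct positive divisors of $N$. *)

(* Defs.v *)
From mathcomp Require Import all_boot.

Definition practical (N : nat) : Prop :=
  0 < N /\
  forall m, 1 <= m <= N ->
    exists s : seq nat, [/\ uniq s, all (fun d => (0 < d) && (d %| N)) s & sumn s = m].

Definition sq_plus_practical (N : nat) : Prop :=
  exists x P : nat, practical P /\ N = x ^ 2 + P.

(* Main.v *)
Require Import Defs.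
From mathcomp Require Import all_boot zify.

Fixpoint pw (k q : nat) : seq nat :=
  if k is k'.+1 then (if odd q then [:: 1] else [::]) ++ map (muln 2) (pw k' q./2)
  else [::].

Lemma sumn_map2 s : sumn (map (muln 2) s) = 2 * sumn s.
Proof. elim: s => [|x s IH] //=; rewrite IH; lia. Qed.

Lemma sumn_mapm m s : sumn (map (muln m) s) = m * sumn s.
Proof. elim: s => [|x s IH] /=; [lia|rewrite IH; lia]. Qed.

Lemma pw_sum k q : q < 2 ^ k -> sumn (pw k q) = q.
Proof.
elim: k q => [|k IH] q /=; first by rewrite expn0; case: q.
move=> Hq; rewrite sumn_cat sumn_map2 IH.
  by rewrite -[in RHS](odd_double_half q); case: (odd q) => /=; rewrite -muln2; lia.
rewrite expnS in Hq; rewrite -(odd_double_half q) -muln2 in Hq; case: (odd q) Hq => /=; lia.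
Qed.

Lemma pw_pow k q d : d \in pw k q -> exists2 i, i < k & d = 2 ^ i.
Proof.
elim: k q d => [|k IH] q d //=.
rewrite mem_cat => /orP[|/mapP[e He ->]].
  by case: (odd q); rewrite ?inE // => /eqP->; exists 0.
have [i Hi ->] := IH _ _ He; exists i.+1 => //; by rewrite expnS.
Qed.

Arguments pw_pow {k q d}.

Lemma pw_uniq k q : uniq (pw k q).
Proof.
elim: k q => [|k IH] q //=.
rewrite cat_uniq; apply/and3P; split.
- by case: (odd q).
- apply/hasPn => y /mapP[e He ->]; have [i _ ->] := pw_pow He.
  case: (odd q); rewrite ?inE //; apply/negP => /eqP; rewrite -expnS.
  by move/(f_equal odd); rewrite oddX.
- rewrite map_inj_uniq //; by move=> a b /eqP; rewrite eqn_pmul2l // => /eqP.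
Qed.

Lemma practical_odd a m : 0 < m -> m < 2 ^ a.+1 -> odd m -> practical (2 ^ a * m).
Proof.
move=> m0 ma om; split; first by rewrite muln_gt0 expn_gt0.
move=> t /andP[t1 tle].
case: (ltngtP t (2 ^ a * m)) tle => // [tlt _|-> _]; last first.
  exists [:: 2 ^ a * m]; split => //=; rewrite ?muln_gt0 ?expn_gt0 ?m0 ?dvdnn //; lia.
have [m1|m1] := eqVneq m 1.
  subst m; rewrite muln1 in tlt *.
  exists (pw a t); split; [exact: pw_uniq| |exact: pw_sum].
  apply/allP => d /pw_pow[i Hi ->]; rewrite expn_gt0 /= dvdn_exp2l //; exact: ltnW.
have m2 : 1 < m by lia.
set q := t %/ m; set r := t %% m.
have qlt : q < 2 ^ a by rewrite /q ltn_divLR.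
have rlt : r < 2 ^ a.+1 by apply: leq_trans (ltn_pmod _ m0) (ltnW ma).
exists (map (muln m) (pw a q) ++ pw a.+1 r); split.
- rewrite cat_uniq pw_uniq map_inj_uniq ?pw_uniq; last first.
    by move=> u v /eqP; rewrite eqn_pmul2l // => /eqP.
  rewrite andbT; apply/hasPn => y /pw_pow[j _ ->]; apply/negP => /mapP[e /pw_pow[i _ ->]] Heq.
  have : m %| 2 ^ j by rewrite Heq dvdn_mulr.
  have cm : coprime m (2 ^ j) by apply: coprimeXr; rewrite coprimen2.
  move=> dv; move: cm; rewrite /coprime; rewrite (gcdn_idPl dv) => /eqP; lia.
- rewrite all_cat; apply/andP; split; apply/allP => d.
    move=> /mapP[e /pw_pow[i Hi ->] ->]; rewrite muln_gt0 m0 expn_gt0 /= mulnC dvdn_mul //.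
    rewrite dvdn_exp2l //; exact: ltnW.
  move=> /pw_pow[i Hi ->]; rewrite expn_gt0 /=; apply: dvdn_mulr; rewrite dvdn_exp2l //.
- rewrite sumn_cat sumn_mapm !pw_sum // [in RHS](divn_eq t m) -/q -/r; lia.
Qed.

Lemma oddpart m : 0 < m -> exists b m', odd m' /\ m = 2 ^ b * m'.
Proof.
elim/ltn_ind: m => m IH m0.
case om: (odd m); first by exists 0, m; rewrite expn0 mul1n.
have h : m = 2 * m./2 by rewrite -{1}(odd_double_half m) om -muln2 mulnC.
have h1 : m./2 < m by lia.
have h2 : 0 < m./2 by lia.
have [b [m' [o e]]] := IH m./2 h1 h2.
by exists b.+1, m'; split => //; rewrite h e expnS mulnA.
Qed.

Lemma practical_pow2 a m : 0 < m -> m < 2 ^ a.+1 -> practical (2 ^ a * m).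
Proof.
move=> m0 ma; have [b [m' [o e]]] := oddpart m m0.
have m'0 : 0 < m' by move: m0; rewrite e muln_gt0 => /andP[].
rewrite e mulnA -expnD; apply: practical_odd => //.
have h1 : m' <= m by rewrite e leq_pmull ?expn_gt0.
have h2 : 2 ^ a.+1 <= 2 ^ (a + b).+1 by rewrite leq_exp2l // ltnS leq_addr.
lia.
Qed.

Lemma hensel N : N %% 8 = 1 -> forall a, exists x q r,
  [/\ odd x, x <= 2 ^ a.+1 & N + q * 2 ^ a.+3 = x ^ 2 + r * 2 ^ a.+3].
Proof.
move=> HN; elim=> [|a [x [q [r [ox xle e]]]]].
  exists 1, 0, (N %/ 8); split => //; rewrite {1}(divn_eq N 8) HN; lia.
set G := 2 ^ a.+1.
have G2 : 2 ^ a.+2 = 2 * G by rewrite /G !expnS; lia.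
have G3 : 2 ^ a.+3 = 4 * G by rewrite /G !expnS; lia.
have G4 : 2 ^ a.+4 = 8 * G by rewrite /G !expnS; lia.
have [g Gg] : exists g, G = 2 * g by exists (2 ^ a); rewrite /G expnS.
have [w xw] : exists w, x = 2 * w + 1.
  by exists x./2; rewrite -{1}(odd_double_half x) ox; lia.
rewrite G3 in e; rewrite G4 G2.
have [Q qQ] : exists Q, q = odd q + 2 * Q by exists q./2; rewrite -{1}(odd_double_half q); lia.
have [R rR] : exists R, r = odd r + 2 * R by exists r./2; rewrite -{1}(odd_double_half r); lia.
case oq: (odd q) qQ => qQ; case orr: (odd r) rR => rR /=.
- exists x, Q, R; split => //; first lia. rewrite qQ rR in e; nia.
- set z := 2 * G - x.
  have zx : z + x = 2 * G by rewrite /z; lia.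
  have zsq : z ^ 2 + 4 * G * x = x ^ 2 + 4 * G * G by nia.
  exists z, (Q + g), (w + R); split; [|lia|].
    have : odd (z + x) = false by rewrite zx oddM.
    by rewrite oddD ox; case: (odd z).
  rewrite qQ rR in e; nia.
- set z := 2 * G - x.
  have zx : z + x = 2 * G by rewrite /z; lia.
  have zsq : z ^ 2 + 4 * G * x = x ^ 2 + 4 * G * G by nia.
  exists z, (Q + g), (w + R + 1); split; [|lia|].
    have : odd (z + x) = false by rewrite zx oddM.
    by rewrite oddD ox; case: (odd z).
  rewrite qQ rR in e; nia.
- exists x, Q, R; split => //; first lia. rewrite qQ rR in e; nia.
Qed.

Lemma findA n N : 4 < N <= 4 ^ n.+1 -> exists a, 4 ^ a.+1 < N <= 4 ^ a.+2.
Proof.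
elim: n => [|n IH]; first by rewrite expn1; lia.
move=> H; case: (leqP N (4 ^ n.+1)) => h; first by apply: IH; lia.
by exists n; lia.
Qed.

Lemma partI N : 0 < N -> N %% 8 = 1 -> sq_plus_practical N.
Proof.
move=> N0 HN.
have [->|N1] := eqVneq N 1.
  by exists 0, 1; split => //; apply: (practical_pow2 0 1).
have N4 : 4 < N by lia.
have [a /andP[lo hi]] : exists a, 4 ^ a.+1 < N <= 4 ^ a.+2.
  apply: (findA N); rewrite N4 /=; have := ltn_expl N (isT : 1 < 4); rewrite expnS; lia.
have [x [q [r [ox xle e]]]] := hensel N HN a.
have x2 : x ^ 2 <= 4 ^ a.+1.
  by rewrite -[4]/(2 ^ 2) expnAC leq_exp2r.
have E1 : 4 ^ a.+2 = 2 ^ a.+3 * 2 ^ a.+1.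
  by rewrite -[4]/(2 ^ 2) -expnM -expnD; congr (_ ^ _); lia.
have E2 : 2 ^ a.+1 < 2 ^ a.+4 by rewrite ltn_exp2l //; lia.
set T := 2 ^ a.+3 in e E1 *.
have T0 : 0 < T by rewrite expn_gt0.
have qr : q < r by nia.
exists x, (T * (r - q)); split; last by nia.
apply: practical_pow2; first lia.
suff : r - q <= 2 ^ a.+1 by lia.
by rewrite -(leq_pmul2l T0); nia.
Qed.

Lemma mem_leq_sumn d s : d \in s -> d <= sumn s.
Proof.
elim: s => [|x s IH] //=; rewrite inE => /orP[/eqP->|/IH]; lia.
Qed.

Lemma sumn_uniq_sub (s t : seq nat) : uniq s -> uniq t -> {subset s <= t} -> sumn s <= sumn t.
Proof.
elim: s t => [|d s IH] t //= /andP[ds us] ut sub.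
have dt : d \in t by apply: sub; rewrite inE eqxx.
rewrite (perm_sumn (perm_to_rem dt)) /= leq_add2l.
apply: IH => //; first exact: rem_uniq.
move=> y ys; apply: rem_mem; last by apply: sub; rewrite inE ys orbT.
by apply/eqP => yd; move: ds; rewrite -yd ys.
Qed.

Lemma pow2s a : sumn [seq 2 ^ i | i <- iota 0 a] = 2 ^ a - 1.
Proof.
elim: a => [|a IH] //.
have -> : iota 0 a.+1 = iota 0 a ++ [:: a] by rewrite -addn1 iotaD.
rewrite map_cat sumn_cat IH /= addn0 expnS.
have := expn_gt0 2 a; lia.
Qed.

Lemma notprac a m : odd m -> 1 < m -> (forall p, prime p -> p %| m -> 2 ^ a.+1 < p) ->
  ~ practical (2 ^ a * m).
Proof.
move=> om m1 Hp [_ H].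
have [s [us /allP als ss]] : exists s : seq nat,
    [/\ uniq s, all (fun d => (0 < d) && (d %| 2 ^ a * m)) s & sumn s = 2 ^ a.+1].
  apply: H; rewrite expn_gt0 /= expnS mulnC leq_mul2l; lia.
have sub : {subset s <= [seq 2 ^ i | i <- iota 0 a.+1]}.
  move=> d ds; have /andP[d0 dd] := als d ds.
  have dle : d <= 2 ^ a.+1 by rewrite -ss; apply: mem_leq_sumn.
  have cdm : coprime d m.
    rewrite /coprime; case: (eqVneq (gcdn d m) 1) => // g1.
    have g0 : 0 < gcdn d m by rewrite gcdn_gt0 d0.
    have g2 : 1 < gcdn d m by rewrite ltn_neqAle eq_sym g1 g0.
    have pp := pdiv_prime g2.
    have pg := pdiv_dvd (gcdn d m).
    have := Hp _ pp (dvdn_trans pg (dvdn_gcdr d m)).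
    have := dvdn_leq d0 (dvdn_trans pg (dvdn_gcdl d m)); lia.
  move: dd; rewrite Gauss_dvdl // => /dvdn_pfactor[] // i ia ->.
  by apply: map_f; rewrite mem_iota; lia.
have := @sumn_uniq_sub _ _ us _ sub.
rewrite map_inj_uniq ?iota_uniq; last exact: expnI.
rewrite pow2s ss => /(_ isT); have := expn_gt0 2 a.+1; lia.
Qed.

Definition nrd q c d := all (fun r => (r * r + d) %% q != c %% q) (iota 0 q).

Lemma nrd_ok q c d N x y : 0 < q -> nrd q c d -> N %% q = c %% q ->
  N = x ^ 2 + d + q * y -> False.
Proof.
move=> q0 /allP H HN E.
have := H (x %% q); rewrite mem_iota ltn_pmod // => /(_ isT).
rewrite -HN E.
have -> : x ^ 2 + d + q * y = y * q + (x * x + d) by lia.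
rewrite modnMDl.
have h : (x %% q * (x %% q)) %% q = (x * x) %% q by rewrite modnMml modnMmr.
by rewrite -modnDml h modnDml eqxx.
Qed.

Definition check A c L qs :=
  [&& 2 ^ A.+1 %| L, nrd (2 ^ A.+1) c 0,
   all (fun p => (prime p && odd p) ==> ((p %| L) && nrd p c 0)) (iota 0 (2 ^ A.+1).+1) &
   all (fun a => has (fun q => [&& 0 < q, q %| L & nrd q c (2 ^ a)]) qs) (iota 0 A.+1)].

Lemma fam_no A c L qs k : check A c L qs -> ~ sq_plus_practical (c + L * k).
Proof.
case/and4P => HL H2 /allP Hp /allP Ha [x [P [pr E]]].
have modL : forall q, q %| L -> (c + L * k) %% q = c %% q.
  by move=> q /dvdnP[l ->]; rewrite addnC mulnAC modnMDl.
have P0 : 0 < P by case: pr.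
have [a [m [om e]]] := oddpart P P0.
have m0 : 0 < m by move: P0; rewrite e muln_gt0 => /andP[].
have aA : a <= A.
  rewrite leqNgt; apply/negP => Aa.
  apply: (@nrd_ok (2 ^ A.+1) c 0 _ x (2 ^ (a - A.+1) * m) _ H2 (modL _ HL) _).
    by rewrite expn_gt0.
  by rewrite E e addn0 mulnA -expnD subnKC.
have m1 : 1 < m.
  case: (eqVneq m 1) => [m1|]; last lia.
  have ain : a \in iota 0 A.+1 by rewrite mem_iota; lia.
  have /hasP[q qin /and3P[q0 qL qn]] := Ha a ain.
  exfalso; apply: (@nrd_ok q c _ _ x 0 q0 qn (modL _ qL)).
  by rewrite E e m1 muln1 muln0 addn0.
rewrite e in pr; apply: (@notprac a m om m1 _ pr).
move=> p pp pm; rewrite ltnNge; apply/negP => ple.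
have po : odd p.
  case: (even_prime pp) => // p2; move: pm; rewrite p2 dvdn2 om //.
have pA : p <= 2 ^ A.+1 by apply: leq_trans ple _; rewrite leq_exp2l.
have /andP[pL pn] : (p %| L) && nrd p c 0.
  by have := Hp p; rewrite mem_iota pp po /= => ->; lia.
have [l ml] := dvdnP pm.
apply: (@nrd_ok p c 0 _ x (2 ^ a * l) (prime_gt0 pp) pn (modL _ pL)).
by rewrite E e ml addn0; lia.
Qed.

Lemma fam A c L qs j : check A c L qs -> c %% 8 = j -> 8 %| L -> 0 < L ->
  forall K, exists k, K <= k /\ ~ sq_plus_practical (8 * k + j).
Proof.
move=> ch cj L8 L0 K; exists (c %/ 8 + L %/ 8 * K).
have eL := divnK L8; have ec := divn_eq c 8.
have l1 : 0 < L %/ 8 by rewrite divn_gt0 // dvdn_leq.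
split; first nia.
have -> : 8 * (c %/ 8 + L %/ 8 * K) + j = c + L * K by rewrite -cj; nia.
exact: fam_no ch.
Qed.

Theorem theorem3p3 :
  (forall N : nat, 0 < N -> N %% 8 = 1 -> sq_plus_practical N) /\
  (forall j : nat, j \in [:: 0; 2; 3; 4; 5; 6; 7] ->
     forall K : nat, exists k : nat, K <= k /\ ~ sq_plus_practical (8 * k + j)).
Proof.
split; first exact: partI.
move=> j; rewrite !inE.
case/predU1P => [->|]; first by apply: (fam 3 1592 240240 [:: 16; 16; 5; 13]); vm_compute.
case/predU1P => [->|]; first by apply: (fam 2 698 840 [:: 5; 7; 8]); vm_compute.
case/predU1P => [->|]; first by apply: (fam 2 467 840 [:: 8; 7; 8]); vm_compute.
case/predU1P => [->|]; first by apply: (fam 3 8588 240240 [:: 16; 16; 16; 7]); vm_compute.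
case/predU1P => [->|]; first by apply: (fam 2 773 840 [:: 5; 8; 7]); vm_compute.
case/predU1P => [->|]; first by apply: (fam 2 278 840 [:: 8; 7; 8]); vm_compute.
move/eqP => ->; by apply: (fam 2 47 840 [:: 8; 8; 8]); vm_compute.
Qed.
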